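(* Let $G^\sigma$ be an oriented graph of order $n$ having a pendant vertex. Then $sr(G^\sigma)=4$ if and only if $G^\sigma$ is one of the following: (1) a graph obtained from an oriented star $S^\sigma_{n-n_1-n_2}$ and a complete bipartite oriented graph $K^\sigma_{n_1,n_2}$ with $n_1+n_2\geq 2$, in which every cycle of length $4$ is evenly-oriented, by inserting edges, with arbitrary orientations, between the center of the star and some (possibly all) vertices of $K^\sigma_{n_1,n_2}$; (2) a graph obtained from an oriented star $S^\sigma_{n-n_1-n_2-n_3}$ and a complete tripartite oriented graph $K^\sigma_{n_1,n_2,n_3}$ with $n_1+n_2+n_3\geq 3$, in which every cycle of length $4$ is evenly-oriented, by inserting edges, with arbitrary orientations, between the center of the star and some (possibly all) vertices of $K^\sigma_{n_1,n_2,n_3}$.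
   Context: An oriented graph $G^\sigma$ is a simple graph $G$ (underlying graph) together with an orientation of each edge. Its skew-adjacency matrix $S(G^\sigma)=(s_{ij})$ has $s_{ij}=1$ if there is an arc from $v_i$ to $v_j$, $s_{ij}=-1$ if there is an arc from $v_j$ to $v_i$, and $0$ otherwise; the skew-rank $sr(G^\sigma)$ is the rank of $S(G^\sigma)$. A pendant vertex is a vertex with exactly one neighbor. $S_m$ denotes the star on $m$ vertices ($K_{1,m-1}$) and $S_m^\sigma$ an orientation of it. For an even cycle $u_1\cdots u_ku_1$, its sign is the sign of $\prod_{i=1}^k s_{u_iu_{i+1}}$ ($u_{k+1}=u_1$); the cycle is evenly-oriented if this sign is positive.
   Formalization: The underlying graph of $G^\sigma$ is also assumed connected; the parts of $K^\sigma_{n_1,n_2}$ and $K^\sigma_{n_1,n_2,n_3}$ are nonempty, and the star has at least one leaf. Each condition added here is assumed in the paper as well or is needed for the statement above to hold. *)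

(* Defs.v *)
From mathcomp Require Import all_boot all_order all_algebra.
Set Implicit Arguments. Unset Strict Implicit. Unset Printing Implicit Defensive.
Import Order.TTheory GRing.Theory Num.Theory.
Local Open Scope ring_scope.

(* An oriented graph on vertex set 'I_n is encoded by its skew-adjacency
   matrix S (over rat): entries in {0,1,-1}, S^T = -S (so the diagonal is 0).
   v_i v_j is an edge of the underlying graph iff S i j != 0, and
   S i j = 1 means the arc goes from v_i to v_j. *)
Definition oriented_graph n (S : 'M[rat]_n) : Prop :=
  (forall i j, S i j \in [:: 0; 1; -1]) /\ (forall i j, S j i = - S i j).

Definition adj n (S : 'M[rat]_n) : rel 'I_n := fun i j => S i j != 0.

Definition skew_rank n (S : 'M[rat]_n) : nat := \rank S.

Definition pendant n (S : 'M[rat]_n) (v : 'I_n) : Prop :=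
  #|[set u | adj S v u]| = 1%N.

Definition connected_graph n (S : 'M[rat]_n) : Prop :=
  forall i j, connect (adj S) i j.

Definition four_cycles_even n (S : 'M[rat]_n) (K : {set 'I_n}) : Prop :=
  forall u1 u2 u3 u4 : 'I_n,
    u1 \in K -> u2 \in K -> u3 \in K -> u4 \in K ->
    uniq [:: u1; u2; u3; u4] ->
    adj S u1 u2 -> adj S u2 u3 -> adj S u3 u4 -> adj S u4 u1 ->
    0 < S u1 u2 * S u2 u3 * S u3 u4 * S u4 u1.

(* The graph is obtained from an oriented star with center c and leaf set L
   (at least one leaf) and an oriented graph on the vertex set K whose
   underlying edges are given by kadj, by inserting edges (arbitrary
   orientation) between c and some (possibly all, possibly no) vertices of K. *)
Definition star_join n (S : 'M[rat]_n) (c : 'I_n) (L K : {set 'I_n})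
    (kadj : rel 'I_n) : Prop :=
  [/\ c \notin L, c \notin K, [disjoint L & K],
      c |: (L :|: K) = [set: 'I_n] & L != set0] /\
  [/\
      (forall l, l \in L -> adj S c l),
      (forall i j, i != c -> j != c -> adj S i j = kadj i j) &
      four_cycles_even S K].

Definition type1 n (S : 'M[rat]_n) : Prop :=
  exists (c : 'I_n) (L V1 V2 : {set 'I_n}),
    [/\ [disjoint V1 & V2], V1 != set0, V2 != set0,
        (2 <= #|V1| + #|V2|)%N &
        star_join S c L (V1 :|: V2)
          (fun i j => ((i \in V1) && (j \in V2)) || ((i \in V2) && (j \in V1)))].

Definition type2 n (S : 'M[rat]_n) : Prop :=
  exists (c : 'I_n) (L V1 V2 V3 : {set 'I_n}),
    [/\ [disjoint V1 & V2], [disjoint V1 & V3] & [disjoint V2 & V3]] /\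
    [/\ V1 != set0, V2 != set0, V3 != set0,
        (3 <= #|V1| + #|V2| + #|V3|)%N &
        star_join S c L (V1 :|: V2 :|: V3)
          (fun i j =>
             [|| (i \in V1) && ((j \in V2) || (j \in V3)),
                 (i \in V2) && ((j \in V1) || (j \in V3)) |
                 (i \in V3) && ((j \in V1) || (j \in V2))])].

(* Main.v *)
Require Import Defs.
From mathcomp Require Import all_boot all_order all_algebra.
From mathcomp Require Import ring lra.
Set Implicit Arguments. Unset Strict Implicit. Unset Printing Implicit Defensive.
Import Order.TTheory GRing.Theory Num.Theory.
Local Open Scope ring_scope.

Definition tri (x : rat) := x \in [:: 0; 1; -1].
Lemma sum_delta n (F : 'I_n -> rat) a : \sum_j F j * (j == a)%:R = F a.
Proof.
rewrite (bigD1 a) //= eqxx mulr1 big1 ?addr0 // => i /negPf ->; by rewrite mulr0.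
Qed.

Lemma rank_le2 n (S : 'M[rat]_n) f g :
  (forall i j, S i j = f i * g j - g i * f j) -> (\rank S <= 2)%N.
Proof.
move=> H.
have -> : S = (\matrix_(i < n, k < 2) (tnth [tuple f i; g i] k)) *m
              (\matrix_(k < 2, j < n) (tnth [tuple g j; - f j] k)).
  apply/matrixP => i j; rewrite H !mxE !big_ord_recr big_ord0 /= !mxE /=.
  rewrite /tnth /=; ring.
exact: leq_trans (mxrankM_maxl _ _) (rank_leq_col _).
Qed.

Lemma rank_le4 n (S : 'M[rat]_n) f g f' g' :
  (forall i j, S i j = f i * g j - g i * f j + (f' i * g' j - g' i * f' j)) ->
  (\rank S <= 4)%N.
Proof.
move=> H.
have -> : S = (\matrix_(i < n, k < 4) (tnth [tuple f i; g i; f' i; g' i] k)) *m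
              (\matrix_(k < 4, j < n) (tnth [tuple g j; - f j; g' j; - f' j] k)).
  apply/matrixP => i j; rewrite H !mxE !big_ord_recr big_ord0 /= !mxE /=.
  rewrite /tnth /=; ring.
exact: leq_trans (mxrankM_maxl _ _) (rank_leq_col _).
Qed.

Definition R4 n (S : 'M[rat]_n) v a b c : 'M[rat]_(4, n) :=
  \matrix_(k < 4, j < n) S (tnth [tuple v; a; b; c] k) j.

Lemma rank_R4 n (S : 'M[rat]_n) v a b c :
  (forall i j, S j i = - S i j) ->
  S v a = 0 -> S v b = 0 -> S v c != 0 -> S a b != 0 ->
  \rank (R4 S v a b c) = 4%N.
Proof.
move=> sk hva hvb hvc hab.
have d0 i : S i i = 0.
  by have := sk i i; lra.
apply/eqP; rewrite eqn_leq rank_leq_row /=.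
set Q := \matrix_(j < n, l < 4) ((j == tnth [tuple c; b; a; v] l)%:R : rat).
apply: leq_trans (mxrankM_maxl _ Q).
set M := _ *m Q.
have ME k l : M k l = S (tnth [tuple v; a; b; c] k) (tnth [tuple c; b; a; v] l).
  by rewrite !mxE; under eq_bigr => j _ do rewrite !mxE; rewrite sum_delta.
have trM : is_trig_mx M.
  apply/is_trig_mxP => i j; rewrite !ME.
  case: i => [[|[|[|[|?]]]] ?] //; case: j => [[|[|[|[|?]]]] ?] //= _;
  rewrite /tnth /= ?d0 //; by rewrite sk ?hva ?hvb oppr0.
have uM : M \in unitmx.
  rewrite unitmxE det_trig // !big_ord_recr big_ord0 /= !ME /tnth /= unitfE.
  rewrite mul1r !mulf_neq0 // ?[S b a]sk ?[S c v]sk ?oppr_eq0 //.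
by rewrite mxrank_unit.
Qed.

Lemma pf_from_rank n (S : 'M[rat]_n) v a b c :
  (forall i j, S j i = - S i j) ->
  (forall j, j != c -> S v j = 0) -> S v c != 0 -> S a b != 0 ->
  a != c -> b != c -> (\rank S <= 4)%N ->
  forall i j, i != c -> j != c ->
    S a b * S i j = S i a * S j b - S j a * S i b.
Proof.
move=> sk hv hvc hab hac hbc hr i j hic hjc.
have d0 k : S k k = 0 by have := sk k k; lra.
have hva := hv a hac; have hvb := hv b hbc.
set R := R4 S v a b c.
have sRS : (R <= S)%MS.
  apply/row_subP => k; have -> : row k R = row (tnth [tuple v; a; b; c] k) S.
    by apply/matrixP => x y; rewrite !mxE.
  exact: row_sub.
have rR := rank_R4 sk hva hvb hvc hab.
have sSR : (S <= R)%MS.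
  rewrite -(mxrank_leqif_sup sRS).2 -/R rR eqn_leq hr andbT.
  by rewrite -rR mxrankS.
have /submxP [D hD] := submx_trans (row_sub i S) sSR.
have E k : S i k = D 0 0 * S v k + D 0 1 * S a k + D 0 2 * S b k + D 0 3 * S c k.
  move/matrixP: hD => /(_ 0 k); rewrite !mxE => ->.
  rewrite !big_ord_recr big_ord0 /= !mxE /tnth /= add0r.
  by congr (_ + _ + _ + _); congr (_ * _); congr (D _ _); apply: val_inj.
have Ev := E v.
rewrite d0 (sk v a) hva (sk v b) hvb oppr0 !mulr0 !add0r (sk v i) hv // oppr0 in Ev.
have D3 : D 0 3 = 0.
  apply/eqP; move: Ev => /esym /eqP; rewrite mulf_eq0 (sk v c) oppr_eq0 (negPf hvc) orbF.
  done.
have Ex k : k != c -> S i k = D 0 1 * S a k + D 0 2 * S b k.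
  by move=> hk; rewrite E D3 mul0r addr0 hv // mulr0 add0r.
have e1 := Ex a hac; have e2 := Ex b hbc.
move: e1 e2; rewrite !d0 !mulr0 ?addr0 ?add0r => e1 e2.
rewrite (Ex j hjc) (sk j b) (sk j a) e1 e2 (sk b a); ring.
Qed.
Lemma triP x : tri x -> [\/ x = 0, x = 1 | x = -1].
Proof. rewrite /tri !inE => /or3P [] /eqP ->; by [apply: Or31 | apply: Or32 | apply: Or33]. Qed.

Ltac tcase h := case/triP: h => ->.

Lemma triM x y : tri x -> tri y -> tri (x * y).
Proof. by move=> hx hy; tcase hx; tcase hy. Qed.

Lemma tri_sq x : tri x -> x != 0 -> x * x = 1.
Proof. by move=> hx; tcase hx => // _; rewrite mulrNN mulr1. Qed.

Lemma N1 A B C : tri A -> tri B -> tri C ->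
  [&& (A != 0) && (C != 0) ==> (A * C < 0), (A != 0) && (B != 0) ==> (0 < A * B),
      (B != 0) && (C != 0) ==> (0 < B * C), [|| A == 0, B == 0 | C == 0],
      (A == 0) && (B == 0) ==> (C == 0), (A == 0) && (C == 0) ==> (B == 0) &
      (B == 0) && (C == 0) ==> (A == 0)] ==> (A - B + C == 0).
Proof. by move=> hA hB hC; tcase hA; tcase hB; tcase hC. Qed.

Lemma N2 P X : tri P -> tri X -> (P != 0) && (P == 1 + X) ==> (0 < P).
Proof. by move=> hP hX; tcase hP; tcase hX. Qed.

Lemma N3 t u x1 y1 x2 y2 : tri t -> tri u -> tri x1 -> tri y1 -> tri x2 -> tri y2 ->
  [&& t != 0, (x1 != 0) || (y1 != 0), (x2 != 0) || (y2 != 0) &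
      t * u == x1 * y2 - x2 * y1] ==>
  ((u != 0) == [|| (x1 == 0) && ((y2 == 0) || ((x2 != 0) && (y2 != 0))),
               (y1 == 0) && ((x2 == 0) || ((x2 != 0) && (y2 != 0))) |
               ((x1 != 0) && (y1 != 0)) && ((x2 == 0) || (y2 == 0))]).
Proof.
move=> ht hu h1 h2 h3 h4; tcase ht; tcase hu; tcase h1; tcase h2; tcase h3; tcase h4; by [].
Qed.

Lemma parts3 (p1 p2 p3 p4 : nat) : (p1 < 3)%N -> (p2 < 3)%N -> (p3 < 3)%N -> (p4 < 3)%N ->
  [&& [|| (p1 == p2) || (p3 == p4), (p1 == p3) || (p2 == p4) | (p1 == p4) || (p2 == p3)],
      ((p1 == p2) || (p3 == p4)) && ((p1 == p3) || (p2 == p4)) ==> ((p1 == p4) || (p2 == p3)),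
      ((p1 == p2) || (p3 == p4)) && ((p1 == p4) || (p2 == p3)) ==> ((p1 == p3) || (p2 == p4)) &
      ((p1 == p3) || (p2 == p4)) && ((p1 == p4) || (p2 == p3)) ==> ((p1 == p2) || (p3 == p4))].
Proof.
by case: p1 => [|[|[|]]] //; case: p2 => [|[|[|]]] //; case: p3 => [|[|[|]]] //;
   case: p4 => [|[|[|]]].
Qed.

Lemma R4_sub n (S : 'M[rat]_n) v a b c : (R4 S v a b c <= S)%MS.
Proof.
apply/row_subP => k; have -> : row k (R4 S v a b c) = row (tnth [tuple v; a; b; c] k) S.
  by apply/matrixP => x y; rewrite !mxE.
exact: row_sub.
Qed.

Definition kadj3 n (V1 V2 V3 : {set 'I_n}) : rel 'I_n := fun i j =>
  [|| (i \in V1) && ((j \in V2) || (j \in V3)),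
      (i \in V2) && ((j \in V1) || (j \in V3)) |
      (i \in V3) && ((j \in V1) || (j \in V2))].

Lemma back n (S : 'M[rat]_n) c (V1 V2 V3 : {set 'I_n}) v a b :
  oriented_graph S ->
  [disjoint V1 & V2] -> [disjoint V1 & V3] -> [disjoint V2 & V3] ->
  a \in V1 -> b \in V2 -> v \notin V1 :|: V2 :|: V3 -> v != c ->
  c \notin V1 :|: V2 :|: V3 -> S v c != 0 ->
  (forall i j, i != c -> j != c -> adj S i j = kadj3 V1 V2 V3 i j) ->
  four_cycles_even S (V1 :|: V2 :|: V3) ->
  \rank S = 4%N.
Proof.
move=> [htri sk] d12 d13 d23 aV1 bV2 vK vc cK hvc hadj h4.
set K := V1 :|: V2 :|: V3 in vK cK h4.
have d0 k : S k k = 0 by have := sk k k; lra.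
have inK x : (x \in K) = [|| x \in V1, x \in V2 | x \in V3] by rewrite !inE orbA.
have Kc x : x \in K -> x != c by apply: contraTneq => ->.
have notK x j : x != c -> j != c -> x \notin K -> S x j = 0.
  move=> xc jc; rewrite inK !negb_or => /and3P [/negPf h1 /negPf h2 /negPf h3].
  by apply/eqP; apply/negbNE; rewrite -/(adj S x j) hadj // /kadj3 h1 h2 h3.
have aK : a \in K by rewrite inK aV1.
have bK : b \in K by rewrite inK bV2 orbT.
have ac := Kc a aK; have bc := Kc b bK.
have hv j : j != c -> S v j = 0 by move=> jc; apply: notK.
have hab : S a b != 0 by rewrite -/(adj S a b) hadj // /kadj3 aV1 bV2.
have lb : (4 <= \rank S)%N.
  rewrite -(rank_R4 sk (hv a ac) (hv b bc) hvc hab); exact: mxrankS (R4_sub _ _ _ _ _).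
pose pt x : nat := if x \in V1 then 0%N else if x \in V2 then 1%N else 2%N.
have ptlt x : (pt x < 3)%N by rewrite /pt; case: ifP => //; case: ifP.
have cls x : x \in K -> [\/ [/\ x \in V1, x \in V2 = false & x \in V3 = false],
    [/\ x \in V1 = false, x \in V2 & x \in V3 = false] |
    [/\ x \in V1 = false, x \in V2 = false & x \in V3]].
  rewrite inK => /or3P [] h.
  - by apply: Or31; rewrite h (disjointFr d12 h) (disjointFr d13 h).
  - by apply: Or32; rewrite h (disjointFl d12 h) (disjointFr d23 h).
  - by apply: Or33; rewrite h (disjointFl d13 h) (disjointFl d23 h).
have hpt x y : x \in K -> y \in K -> (S x y == 0) = (pt x == pt y).
  move=> xK yK; rewrite -[S x y == 0]negbK -/(adj S x y) hadj ?Kc // /kadj3 /pt.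
  by case: (cls x xK) => [] [-> -> ->]; case: (cls y yK) => [] [-> -> ->].
have tr i j : tri (S i j) by exact: htri.
have Pf4 u1 u2 u3 u4 : u1 \in K -> u2 \in K -> u3 \in K -> u4 \in K ->
    uniq [:: u1; u2; u3; u4] ->
    S u1 u2 * S u3 u4 - S u1 u3 * S u2 u4 + S u1 u4 * S u2 u3 = 0.
  move=> k1 k2 k3 k4 hu.
  have /and4P [e12 e13 e14 /and3P [e23 e24 e34]] :
      [&& u1 != u2, u1 != u3, u1 != u4 & [&& u2 != u3, u2 != u4 & u3 != u4]].
    by move: hu; rewrite /= !inE !negb_or; case/and4P => /and3P [-> -> ->] /andP [-> ->] ->.
  have cyc x1 x2 x3 x4 : x1 \in K -> x2 \in K -> x3 \in K -> x4 \in K ->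
     uniq [:: x1; x2; x3; x4] -> S x1 x2 != 0 -> S x2 x3 != 0 -> S x3 x4 != 0 ->
     S x1 x4 != 0 -> 0 < S x1 x2 * S x2 x3 * S x3 x4 * S x4 x1.
    move=> y1 y2 y3 y4 hu' h12 h23 h34 h14; apply: h4 => //.
    by rewrite /adj sk oppr_eq0.
  have Kc1 := Kc _ k1; have Kc2 := Kc _ k2.
  apply/eqP; apply: (implyP (N1 (triM (tr _ _) (tr _ _)) (triM (tr _ _) (tr _ _))
     (triM (tr u1 u4) (tr u2 u3)))).
  rewrite !mulf_eq0 !negb_or !hpt //.
  move: (parts3 (ptlt u1) (ptlt u2) (ptlt u3) (ptlt u4)) => /and4P [-> -> -> ->].
  rewrite !andbT.
  apply/and3P; split; apply/implyP => /and3P [/andP [h1 h2] h3 h4'].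
  - rewrite -oppr_gt0.
    have -> : - (S u1 u2 * S u3 u4 * (S u1 u4 * S u2 u3)) =
       S u1 u2 * S u2 u3 * S u3 u4 * S u4 u1 by rewrite (sk u1 u4); ring.
    by apply: cyc => //; rewrite hpt //; rewrite eq_sym.
  - have -> : S u1 u2 * S u3 u4 * (S u1 u3 * S u2 u4) =
       S u1 u2 * S u2 u4 * S u4 u3 * S u3 u1 by rewrite (sk u3 u4) (sk u1 u3); ring.
    apply: cyc => //; first by rewrite /= !inE !negb_or e12 e14 e13 e24 e23 eq_sym e34.
    all: try (by rewrite hpt //; rewrite eq_sym).
  - have -> : S u1 u3 * S u2 u4 * (S u1 u4 * S u2 u3) =
       S u1 u3 * S u3 u2 * S u2 u4 * S u4 u1 by rewrite (sk u2 u3) (sk u1 u4); ring.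
    apply: cyc => //; first by rewrite /= !inE !negb_or e13 e12 e14 eq_sym e23 e34 e24.
    all: try (by rewrite hpt //; rewrite eq_sym).
have F i j : i != c -> j != c -> S a b * S i j = S i a * S j b - S j a * S i b.
  move=> ic jc.
  have [iK|iK] := boolP (i \in K); last by rewrite !(notK i) // !mulr0 mul0r subrr.
  have [jK|jK] := boolP (j \in K); last first.
    by rewrite (sk j i) !(notK j) // oppr0 !mulr0 mul0r subrr.
  have [->|ia] := eqVneq i a; first by rewrite d0 (sk a j); ring.
  have [->|ib] := eqVneq i b; first by rewrite d0 (sk a b) (sk b j); ring.
  have [->|ja] := eqVneq j a; first by rewrite d0; ring.
  have [->|jb] := eqVneq j b; first by rewrite d0 (sk a b); ring.
  have [->|ij] := eqVneq i j; first by rewrite d0; ring.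
  have P := Pf4 a b i j aK bK iK jK.
  have ab : a != b by apply: contraNneq hab => ->; rewrite d0.
  rewrite /= !inE !negb_or ab eq_sym ia eq_sym ja eq_sym ib eq_sym jb ij in P.
  have {}P := P isT.
  rewrite (sk a i) (sk b j) (sk a j) (sk b i).
  transitivity (S a b * S i j - (S a b * S i j - S a i * S b j + S a j * S b i)).
    by rewrite P subr0.
  ring.
apply/eqP; rewrite eqn_leq lb andbT.
apply: (@rank_le4 _ S (fun i => (i == c)%:R) (fun j => S c j)
  (fun i => if i == c then 0 else S i a / S a b) (fun j => if j == c then 0 else S j b)).
move=> i j; have [->|ic] := eqVneq i c; have [->|jc] := eqVneq j c.
- by rewrite ?eqxx /= d0; ring.
- by rewrite ?eqxx ?(negPf jc) /= d0; ring.
- by rewrite ?eqxx ?(negPf ic) /= (sk i c); ring.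
rewrite ?(negPf ic) ?(negPf jc) /=.
have -> : S i j = (S a b * S i j) / S a b by field.
by rewrite F //; field.
Qed.

Lemma forward n (S : 'M[rat]_n) : oriented_graph S -> connected_graph S ->
  (exists v, pendant S v) -> \rank S = 4%N ->
  exists c (V1 V2 V3 : {set 'I_n}),
  [/\ [disjoint V1 & V2], [disjoint V1 & V3], [disjoint V2 & V3], V1 != set0 & V2 != set0] /\
  [/\ (forall i j, i != c -> j != c -> adj S i j = kadj3 V1 V2 V3 i j),
      four_cycles_even S (V1 :|: V2 :|: V3) &
      star_join S c [set x | (x != c) && (x \notin V1 :|: V2 :|: V3)] (V1 :|: V2 :|: V3)
        (kadj3 V1 V2 V3)].
Proof.
move=> [htri sk] hcon [v hpen] hr.
have d0 k : S k k = 0 by have := sk k k; lra.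
have tr i j : tri (S i j) by exact: htri.
have [c hc] : exists c, [set u | adj S v u] = [set c] by apply/cards1P; rewrite hpen.
have hvu u : (S v u != 0) = (u == c).
  by have := congr1 (fun A : {set 'I_n} => u \in A) hc; rewrite !inE.
have hvc : S v c != 0 by rewrite hvu.
have hv j : j != c -> S v j = 0.
  by move=> jc; apply/eqP; apply/negbNE; rewrite hvu.
have vc : v != c by apply/eqP => e; move: hvc; rewrite -e d0 eqxx.
have [/existsP [a /existsP [b /and3P [ac bc hab]]] | hne] :=
  boolP [exists a, exists b, [&& a != c, b != c & S a b != 0]]; last first.
  have : (\rank S <= 2)%N.
    apply: (@rank_le2 _ S (fun i => (i == c)%:R) (fun j => S c j)) => i j.
    have [->|ic] := eqVneq i c; have [->|jc] := eqVneq j c.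
    - by rewrite ?eqxx /= d0; ring.
    - by rewrite ?eqxx ?(negPf jc) /=; ring.
    - by rewrite ?eqxx ?(negPf ic) /= (sk i c); ring.
    rewrite ?(negPf ic) ?(negPf jc) /= mul0r mulr0 subrr.
    apply/eqP; apply: contraNT hne => h; apply/existsP; exists i; apply/existsP; exists j.
    by rewrite ic jc h.
  by rewrite hr.
have F := pf_from_rank sk hv hvc hab ac bc (eq_leq hr).
set t := S a b in hab F.
set K := [set x | (x != c) && [exists j, (j != c) && (S x j != 0)]].
have inK x : (x \in K) = (x != c) && [exists j, (j != c) && (S x j != 0)] by rewrite inE.
clearbody K.
have Kc x : x \in K -> x != c by rewrite inK => /andP [].
have notK x j : x != c -> x \notin K -> j != c -> S x j = 0.
  move=> xc xK jc; apply/eqP; apply/negbNE; apply: contra xK => h.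
  by rewrite inK xc; apply/existsP; exists j; rewrite jc.
have aK : a \in K by rewrite inK ac; apply/existsP; exists b; rewrite bc.
have bK : b \in K.
  by rewrite inK bc; apply/existsP; exists a; rewrite ac (sk a b) oppr_eq0.
have KxY x : x \in K -> (S x a != 0) || (S x b != 0).
  move=> xK; move: (xK); rewrite inK => /andP [xc /existsP [j /andP [jc hxj]]].
  have [xa|] := eqVneq (S x a) 0; last by [].
  have [xb|] := eqVneq (S x b) 0; last by [].
  have := F x j xc jc; rewrite xa xb !mul0r mulr0 subr0 => /eqP.
  by rewrite mulf_eq0 (negPf hab) (negPf hxj).
set V1 := [set x in K | S x a == 0].
set V2 := [set x in K | S x b == 0].
set V3 := [set x in K | (S x a != 0) && (S x b != 0)].
have hU : V1 :|: V2 :|: V3 = K.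
  apply/setP => x; rewrite !inE; case: (boolP (x \in K)) => //= xK.
  by case: (S x a == 0); case: (S x b == 0).
have hadj i j : i != c -> j != c -> adj S i j = kadj3 V1 V2 V3 i j.
  move=> ic jc; rewrite /adj /kadj3 /V1 /V2 /V3 !inE.
  have [iK|iK] := boolP (i \in K); last by rewrite /= (notK i j) // eqxx.
  have [jK|jK] := boolP (j \in K); last first.
    by rewrite /= !andbF /= (sk j i) (notK j i) // oppr0 eqxx.
  rewrite /=.
  have H := N3 (tr a b) (tr i j) (tr i a) (tr i b) (tr j a) (tr j b).
  rewrite -/t hab !KxY //= F // eqxx /= in H.
  by move: H => /eqP.
have h4 : four_cycles_even S (V1 :|: V2 :|: V3).
  rewrite hU => u1 u2 u3 u4 k1 k2 k3 k4 hu a12 a23 a34 a41.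
  have c1 := Kc _ k1; have c2 := Kc _ k2; have c3 := Kc _ k3; have c4 := Kc _ k4.
  have E : t * t * (S u1 u2 * S u3 u4 - S u1 u3 * S u2 u4 + S u1 u4 * S u2 u3) = 0.
    transitivity ((t * S u1 u2) * (t * S u3 u4) - (t * S u1 u3) * (t * S u2 u4)
       + (t * S u1 u4) * (t * S u2 u3)); first ring.
    rewrite !F //; ring.
  move/eqP: E; rewrite !mulf_eq0 (negPf hab) /= => /eqP P.
  have h : S u1 u2 * S u3 u4 = S u1 u3 * S u2 u4 - S u1 u4 * S u2 u3.
    by rewrite -[LHS]subr0 -P; ring.
  have a14 : S u1 u4 != 0 by move: a41; rewrite /adj (sk u1 u4) oppr_eq0.
  have s14 := tri_sq (tr u1 u4) a14.
  have s23 := tri_sq (tr u2 u3) a23.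
  have := N2 (triM (triM (triM (tr u1 u2) (tr u2 u3)) (tr u3 u4)) (tr u4 u1))
     (triM (triM (triM (tr u1 u3) (tr u2 u4)) (tr u2 u3)) (tr u4 u1)).
  move/implyP; apply; apply/andP; split.
    by rewrite !mulf_neq0.
  apply/eqP.
  have -> : 1 + S u1 u3 * S u2 u4 * S u2 u3 * S u4 u1 =
     S u1 u4 * S u1 u4 * (S u2 u3 * S u2 u3) + S u1 u3 * S u2 u4 * S u2 u3 * S u4 u1.
    by rewrite s14 s23 mulr1.
  transitivity (S u1 u2 * S u3 u4 * S u2 u3 * S u4 u1); first ring.
  rewrite h (sk u1 u4); ring.
exists c, V1, V2, V3; split.
  split.
  - apply/pred0P => x /=; rewrite !inE; apply/negbTE; apply/negP.
    move=> /andP [/andP [xK /eqP xa] /andP [_ /eqP xb]].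
    by move: (KxY x xK); rewrite xa xb eqxx.
  - by apply/pred0P => x /=; rewrite !inE; case: (x \in K); case: (S x a == 0).
  - by apply/pred0P => x /=; rewrite !inE; case: (x \in K); case: (S x b == 0); rewrite ?andbF.
  - by apply/set0Pn; exists a; rewrite !inE aK d0 eqxx.
  - by apply/set0Pn; exists b; rewrite !inE bK d0 eqxx.
split => //; rewrite hU; split.
- split.
  + by rewrite inE eqxx.
  + by apply/negP => /Kc; rewrite eqxx.
  + by apply/pred0P => x /=; rewrite !inE; case: (x \in K); rewrite ?andbF.
  + by apply/setP => x; rewrite !inE; case: (x == c); case: (x \in K).
  + apply/set0Pn; exists v; rewrite inE vc /=; apply/negP.
    by rewrite inK => /andP [_ /existsP [j /andP [jc]]]; rewrite hv.
- split => //.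
  move=> l; rewrite inE => /andP [lc lK].
  case/connectP: (hcon l c) => p.
  case: p => [/= _ e|z p /= /andP [hz _] _]; first by rewrite e eqxx in lc.
  have zc : z = c.
    apply/eqP; apply: contraNT lK => zc; rewrite inK lc; apply/existsP; exists z.
    by rewrite zc; exact: hz.
  by rewrite /adj (sk l c) oppr_eq0 -zc.
by rewrite -hU.
Qed.

Theorem theorem3p4 (n : nat) (S : 'M[rat]_n) :
  oriented_graph S -> connected_graph S -> (exists v, pendant S v) ->
  (skew_rank S = 4%N <-> (type1 S \/ type2 S)).
Proof.
move=> og hcon hp; have sk := og.2; split.
- move=> hr; have [c [V1 [V2 [V3 [[d12 d13 d23 n1 n2] [hadj h4 sj]]]]]] :=
    forward og hcon hp hr.
  have [/eqP e3|n3] := boolP (V3 == set0).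
  + left; exists c, [set x | (x != c) && (x \notin V1 :|: V2)], V1, V2.
    split => //.
      by apply: (@leq_add 1 1); rewrite card_gt0.
    move: sj; rewrite e3 setU0 => -[h1 [h6 h7 h8]]; split => //; split => //.
    move=> i j ic jc; rewrite h7 // /kadj3 !in_set0 /= ?orbF ?andbF //.
  + right; exists c, [set x | (x != c) && (x \notin V1 :|: V2 :|: V3)], V1, V2, V3.
    split => //; split => //.
    by apply: (@leq_add 2 1); [apply: (@leq_add 1 1)|]; rewrite card_gt0.
- case.
  + move=> [c [L [V1 [V2 [d12 n1 n2 _ [[cL cK dLK cov nL] [hcl hadj h4]]]]]]].
    have [v vL] := set0Pn _ nL; have [a aV1] := set0Pn _ n1; have [b bV2] := set0Pn _ n2.
    apply: (@back n S c V1 V2 set0 v a b og d12 _ _ aV1 bV2).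
    * by rewrite disjoint_sym; apply: eq_disjoint0 => x; rewrite !inE.
    * by rewrite disjoint_sym; apply: eq_disjoint0 => x; rewrite !inE.
    * by rewrite setU0 (disjointFr dLK vL).
    * by apply/eqP => e; move: cL; rewrite -e vL.
    * by rewrite setU0.
    * by move: (hcl v vL); rewrite /adj (sk v c) oppr_eq0.
    * by move=> i j ic jc; rewrite hadj // /kadj3 !in_set0 /= ?orbF ?andbF.
    * by rewrite setU0.
  + move=> [c [L [V1 [V2 [V3 [[d12 d13 d23] [n1 n2 n3 _ [[cL cK dLK cov nL] [hcl hadj h4]]]]]]]]].
    have [v vL] := set0Pn _ nL; have [a aV1] := set0Pn _ n1; have [b bV2] := set0Pn _ n2.
    apply: (@back n S c V1 V2 V3 v a b og d12 d13 d23 aV1 bV2) => //.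
    * by rewrite (disjointFr dLK vL).
    * by apply/eqP => e; move: cL; rewrite -e vL.
    * by move: (hcl v vL); rewrite /adj (sk v c) oppr_eq0.
Qed.
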